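(* Let $\kappa,\kappa'$ be two functions as in the standing assumptions with $\lim_{t\to\infty}\kappa'(t)/\kappa(t)=0$. Then $\partial_{\kappa'}X_A\subsetneq\partial_\kappa X_A$, i.e. the inclusion is strict.
   Context: $A=\mathbb Z^2*\mathbb Z=\langle g_1,g_2,g_3\mid[g_1,g_2]\rangle$ and $X_A$ is the universal cover of its Salvetti complex: a CAT(0) tree of flats, each flat a Euclidean plane tiled by unit squares (cosets of $\langle g_1,g_2\rangle$), joined by unit-length edges labelled $g_3$ attached at lattice points; base point $\mathfrak o$ a lattice point of a flat at which a $g_3$ edge is attached; $\|x\|=d(\mathfrak o,x)$. For $\lambda:[0,\infty)\to[1,\infty)$ monotone increasing, concave and sublinear, put $\lambda(x)=\lambda(\|x\|)$, $\mathcal N_\lambda(Z,n)=\{x:d(x,Z)\le n\lambda(x)\}$; a closed set $Z$ is $\lambda$--contracting if there is $c_Z$ with $\operatorname{diam}(x_Z\cup y_Z)\le c_Z\lambda(x)$ whenever $d(x,y)\le d(x,Z)$; quasi-geodesic rays are continuous quasi-isometric embeddings of $[0,\infty)$ starting at $\mathfrak o$, two rays $\lambda$--fellow travel if each lies in some $\mathcal N_\lambda(\cdot,n)$ of the other; $\partial_\lambda X_A$ is the set of $\lambda$--fellow-travelling classes of $\lambda$--contracting quasi-geodesic rays (equivalently, the set of $\lambda$--contracting geodesic rays from $\mathfrak o$). *)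

(* Defs.v *)
From Stdlib Require Import Reals ZArith List Bool.
Import ListNotations.
Open Scope R_scope.

(* Concrete model of X_A, the universal cover of the Salvetti complex of   *)
(* A = Z^2 * Z = <g1,g2,g3 | [g1,g2]>: a tree of flats.                     *)
(* Flats (cosets of <g1,g2>) are indexed by their position in the          *)
(* Bass-Serre tree, i.e. by a word [l1; ...; lk] read from the root flat.  *)
(* A letter l = ((a,b), e) means: the child flat is attached, at its       *)
(* origin, by a unit g3-edge to the lattice point (a,b) of the parent flat;*)
(* e = true if the edge is traversed as g3 (parent -> child), e = false if *)
(* it is traversed as g3^{-1}.  Every lattice point carries exactly one    *)
(* outgoing and one incoming g3-edge; at the origin of a non-root flat one *)
(* of them is the edge to the parent, hence the constraint below.          *)

Definition Letter : Type := ((Z * Z) * bool)%type.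

Definition letter_eqb (a b : Letter) : bool :=
  Z.eqb (fst (fst a)) (fst (fst b)) && Z.eqb (snd (fst a)) (snd (fst b))
  && Bool.eqb (snd a) (snd b).

Fixpoint valid_from (prev : Letter) (w : list Letter) : Prop :=
  match w with
  | [] => True
  | a :: r => (fst a = (0%Z, 0%Z) -> snd a = snd prev) /\ valid_from a r
  end.

Definition valid_word (w : list Letter) : Prop :=
  match w with [] => True | a :: r => valid_from a r end.

(* Points: FP c x y = point (x,y) of the flat c (lattice points = vertices);
   EP c l t = interior point of the g3-edge joining the lattice point of
   flat c given by l to the origin of flat c ++ [l], at distance t from the
   parent flat c. *)
Inductive Pt : Type :=
  | FP (c : list Letter) (x y : R)
  | EP (c : list Letter) (l : Letter) (t : R).

Definition valid_pt (p : Pt) : Prop :=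
  match p with
  | FP c _ _ => valid_word c
  | EP c l t => valid_word (c ++ [l]) /\ 0 < t < 1
  end.

Definition XA : Type := { p : Pt | valid_pt p }.

Definition full (p : Pt) : list Letter :=
  match p with FP c _ _ => c | EP c l _ => c ++ [l] end.

Definition hR (l : Letter) : R * R := (IZR (fst (fst l)), IZR (snd (fst l))).
Definition norm2 (v : R * R) : R := sqrt (fst v * fst v + snd v * snd v).
Definition dist2 (a b : R * R) : R := norm2 (fst a - fst b, snd a - snd b).

(* cost of climbing from the origin of flat g ++ s up to the attaching
   lattice point (in g) of the first letter of s, minus the last edge *)
Definition climb (s : list Letter) : R :=
  fold_right (fun l acc => 1 + norm2 (hR l) + acc) 0 (tl s).

(* distance from the point to the attaching point in the parent flat *)
Definition u_up (p : Pt) : R :=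
  match p with FP _ x y => norm2 (x, y) + 1 | EP _ _ t => t end.

(* position/offset of the point relative to its own flat (full p) *)
Definition q_own (p : Pt) : R * R :=
  match p with FP _ x y => (x, y) | EP _ _ _ => (0, 0) end.
Definition e_own (p : Pt) : R :=
  match p with FP _ _ _ => 0 | EP _ _ t => 1 - t end.

Fixpoint lcp_rest (a b : list Letter) : list Letter * list Letter :=
  match a, b with
  | x :: a', y :: b' => if letter_eqb x y then lcp_rest a' b' else (a, b)
  | _, _ => (a, b)
  end.

(* entry point into the common ancestor flat, and distance to it *)
Definition pos_off (p : Pt) (s : list Letter) : (R * R) * R :=
  match s with
  | [] => (q_own p, e_own p)
  | l :: _ => (hR l, u_up p + climb s)
  end.

(* the CAT(0) (tree-of-flats) distance *)
Definition pdist (p q : Pt) : R :=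
  let s := lcp_rest (full p) (full q) in
  match p, q, fst s, snd s with
  | EP _ _ t1, EP _ _ t2, [], [] => Rabs (t1 - t2)
  | _, _, _, _ =>
      let a := pos_off p (fst s) in
      let b := pos_off q (snd s) in
      snd a + dist2 (fst a) (fst b) + snd b
  end.

Definition dX (x y : XA) : R := pdist (proj1_sig x) (proj1_sig y).

Definition o_pt : Pt := FP [] 0 0.
Definition o : XA := exist valid_pt o_pt I.

Definition nrm (x : XA) : R := dX o x.

Definition geodesic_ray (g : R -> XA) : Prop :=
  proj1_sig (g 0) = o_pt /\
  forall s t, 0 <= s -> 0 <= t -> dX (g s) (g t) = Rabs (s - t).

Definition on_ray (g : R -> XA) (z : XA) : Prop := exists s, 0 <= s /\ z = g s.

Definition is_dist_to (Zs : XA -> Prop) (x : XA) (r : R) : Prop :=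
  (forall z, Zs z -> r <= dX x z) /\
  (forall eps, 0 < eps -> exists z, Zs z /\ dX x z < r + eps).

Definition proj_pt (Zs : XA -> Prop) (x p : XA) : Prop :=
  Zs p /\ exists r, is_dist_to Zs x r /\ dX x p = r.

Definition contracting (lam : R -> R) (Zs : XA -> Prop) : Prop :=
  exists c : R, forall x y : XA,
    (forall r, is_dist_to Zs x r -> dX x y <= r) ->
    forall p q, (proj_pt Zs x p \/ proj_pt Zs y p) ->
                (proj_pt Zs x q \/ proj_pt Zs y q) ->
                dX p q <= c * lam (nrm x).

Definition lim_infty_zero (f : R -> R) : Prop :=
  forall eps, 0 < eps -> exists M, forall t, M <= t -> Rabs (f t) < eps.

Definition admissible (lam : R -> R) : Prop :=
  (forall t, 0 <= t -> 1 <= lam t) /\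
  (forall s t, 0 <= s -> s <= t -> lam s <= lam t) /\
  (forall s t a, 0 <= s -> 0 <= t -> 0 <= a <= 1 ->
      a * lam s + (1 - a) * lam t <= lam (a * s + (1 - a) * t)) /\
  lim_infty_zero (fun t => lam t / t).

(* Main.v *)
Require Import Defs.
From Stdlib Require Import Reals Lra Lia ZArith List Bool Classical ClassicalEpsilon.
Import ListNotations.
Open Scope R_scope.

Lemma letter_eqb_refl : forall a, letter_eqb a a = true.
Proof.
  intros [[x y] b]; unfold letter_eqb; simpl.
  rewrite !Z.eqb_refl. destruct b; reflexivity.
Qed.

Lemma letter_eqb_false : forall a b, a <> b -> letter_eqb a b = false.
Proof.
  intros [[x y] e] [[x' y'] e'] H; unfold letter_eqb; simpl.
  destruct (Z.eqb_spec x x'); destruct (Z.eqb_spec y y'); destruct e, e'; simpl; auto;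
  subst; exfalso; apply H; reflexivity.
Qed.

Lemma letter_eqb_comm : forall a b, letter_eqb a b = letter_eqb b a.
Proof.
  intros [[x y] e] [[x' y'] e']; unfold letter_eqb; simpl.
  rewrite (Z.eqb_sym x), (Z.eqb_sym y). destruct e, e'; reflexivity.
Qed.

Lemma lcp_swap : forall a b, lcp_rest b a = (snd (lcp_rest a b), fst (lcp_rest a b)).
Proof.
  induction a as [|x a IH]; intros [|y b]; simpl; auto.
  rewrite letter_eqb_comm. destruct (letter_eqb x y); simpl; auto.
Qed.

Lemma lcp_app : forall p a b, lcp_rest (p ++ a) (p ++ b) = lcp_rest a b.
Proof. induction p; intros; simpl; auto. rewrite letter_eqb_refl; auto. Qed.

Lemma lcp_nil_l : forall b, lcp_rest [] b = ([], b).
Proof. destruct b; reflexivity. Qed.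

Lemma lcp_nil_r : forall a, lcp_rest a [] = (a, []).
Proof. destruct a; reflexivity. Qed.

Lemma dist2_sym : forall a b, dist2 a b = dist2 b a.
Proof.
  intros [a1 a2] [b1 b2]; unfold dist2, norm2; simpl. f_equal. ring.
Qed.

Lemma pdist_sym : forall p q, pdist p q = pdist q p.
Proof.
  intros p q. unfold pdist. cbv zeta. rewrite (lcp_swap (full q) (full p)).
  destruct p, q; simpl full;
  destruct (lcp_rest _ _) as [a b]; simpl;
  destruct a, b; simpl; try rewrite dist2_sym; try ring;
  apply Rabs_minus_sym.
Qed.

Lemma norm2_pos : forall v, 0 <= norm2 v.
Proof. intros; unfold norm2; apply sqrt_pos. Qed.

Lemma dist2_pos : forall a b, 0 <= dist2 a b.
Proof. intros; unfold dist2; apply norm2_pos. Qed.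

Definition F (L : list Letter) : R :=
  fold_right (fun l acc => 1 + norm2 (hR l) + acc) 0 L.

Lemma F_pos : forall L, 0 <= F L.
Proof. induction L; simpl; [lra|]. pose proof (norm2_pos (hR a)); lra. Qed.

Lemma F_app : forall A B, F (A ++ B) = F A + F B.
Proof. induction A; intros; simpl; [ring|]. rewrite IHA; ring. Qed.

Lemma climb_F : forall s, climb s = F (tl s).
Proof. reflexivity. Qed.

Lemma u_up_pos : forall p, valid_pt p -> 0 < u_up p.
Proof.
  intros [c x y|c l t] H; simpl in *.
  - pose proof (norm2_pos (x,y)); lra.
  - lra.
Qed.

Lemma e_own_pos : forall p, valid_pt p -> 0 <= e_own p.
Proof. intros [c x y|c l t] H; simpl in *; lra. Qed.

Lemma pos_off_pos : forall p s, valid_pt p -> 0 <= snd (pos_off p s).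
Proof.
  intros p [|l s] H; simpl.
  - apply e_own_pos; auto.
  - pose proof (u_up_pos p H). pose proof (F_pos s). rewrite climb_F; simpl; lra.
Qed.

Lemma nrm_pos : forall x : XA, 0 <= nrm x.
Proof.
  intros [p Hp]. unfold nrm, dX, pdist; simpl.
  simpl.
  pose proof (dist2_pos (0,0) (fst (pos_off p (full p)))).
  pose proof (pos_off_pos p (full p) Hp).
  destruct p; simpl in *; lra.
Qed.


Definition nn (k : R -> R) (t : R) : nat := Z.to_nat (Int_part (k t)).
Fixpoint tt (k : R -> R) (j : nat) : R :=
  match j with O => 0 | S j' => tt k j' + INR (nn k (tt k j')) + 1 end.
Definition NR k j := INR (nn k (tt k j)).
Definition rl k j : Letter := ((Z.of_nat (nn k (tt k j)), 0%Z), true).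
Definition W k a b := map (rl k) (seq a b).
Definition w k j := W k 0 j.

Lemma tt_S : forall k j, tt k (S j) = tt k j + NR k j + 1.
Proof. reflexivity. Qed.

Lemma NR_pos : forall k j, 0 <= NR k j.
Proof. intros; apply pos_INR. Qed.

Lemma tt_ge : forall k j, INR j <= tt k j.
Proof.
  intros k j; induction j; simpl tt; [simpl; lra|].
  rewrite S_INR. pose proof (pos_INR (nn k (tt k j))). lra.
Qed.

Lemma tt_pos : forall k j, 0 <= tt k j.
Proof. intros; pose proof (tt_ge k j); pose proof (pos_INR j); lra. Qed.

Lemma tt_mono : forall k i j, (i <= j)%nat -> tt k i <= tt k j.
Proof.
  intros k i j H; induction H; [lra|]. rewrite tt_S; pose proof (NR_pos k m); lra.
Qed.

Lemma tt_lt : forall k i j, (i < j)%nat -> tt k (S i) <= tt k j.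
Proof. intros; apply tt_mono; lia. Qed.

Lemma W_S : forall k a b, W k a (S b) = rl k a :: W k (S a) b.
Proof. reflexivity. Qed.

Lemma W_app : forall k a b c, W k a (b + c) = W k a b ++ W k (a + b) c.
Proof. intros; unfold W; rewrite seq_app, map_app; reflexivity. Qed.

Lemma w_split : forall k m J, (m <= J)%nat -> w k J = w k m ++ W k m (J - m).
Proof.
  intros k m J H. unfold w. replace J with (m + (J - m))%nat at 1 by lia.
  rewrite W_app; reflexivity.
Qed.

Lemma w_S : forall k j, w k (S j) = w k j ++ [rl k j].
Proof.
  intros. unfold w. replace (S j) with (j + 1)%nat by lia. rewrite W_app. reflexivity.
Qed.

Lemma hR_rl : forall k j, hR (rl k j) = (NR k j, 0).
Proof. intros; unfold hR, rl, NR; simpl. rewrite <- INR_IZR_INZ. reflexivity. Qed.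

Lemma norm2_x0 : forall x, norm2 (x, 0) = Rabs x.
Proof.
  intros; unfold norm2; simpl. rewrite <- sqrt_Rsqr_abs. f_equal. unfold Rsqr; ring.
Qed.

Lemma dist2_x0 : forall a b, dist2 (a, 0) (b, 0) = Rabs (a - b).
Proof. intros; unfold dist2; simpl. replace (0 - 0) with 0 by ring. apply norm2_x0. Qed.

Lemma F_W : forall k b a, F (W k a b) = tt k (a + b) - tt k a.
Proof.
  intros k b; induction b; intros a.
  - simpl. rewrite Nat.add_0_r; ring.
  - rewrite W_S. simpl F. fold (F (W k (S a) b)). rewrite IHb, hR_rl, norm2_x0.
    rewrite Rabs_right by (apply Rle_ge, NR_pos).
    replace (S a + b)%nat with (a + S b)%nat by lia. rewrite tt_S. ring.
Qed.

Lemma valid_from_W : forall k l b a, snd l = true -> valid_from l (W k a b).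
Proof.
  intros k l b; revert l; induction b; intros l a Hl; simpl; auto.
  split; [intros _; rewrite Hl; reflexivity|]. apply IHb; reflexivity.
Qed.

Lemma valid_w : forall k j, valid_word (w k j).
Proof.
  intros k [|j]; [simpl; auto|]. unfold w; rewrite W_S. simpl. apply valid_from_W; reflexivity.
Qed.

Definition ptat k j u : Pt :=
  if Rle_dec u (NR k j) then FP (w k j) u 0 else EP (w k j) (rl k j) (u - NR k j).

Definition idx k s : nat := epsilon (inhabits 0%nat) (fun j => tt k j <= s < tt k (S j)).

Lemma exists_idx : forall k s, 0 <= s -> exists j, tt k j <= s < tt k (S j).
Proof.
  intros k s Hs.
  assert (forall N, s < tt k N -> exists j, tt k j <= s < tt k (S j)) as H.
  { induction N; intros HN; simpl in HN; [lra|].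
    destruct (Rlt_dec s (tt k N)); auto. exists N; simpl; split; lra. }
  destruct (archimed s) as [H1 _].
  apply (H (S (Z.to_nat (up s)))).
  pose proof (tt_ge k (S (Z.to_nat (up s)))). rewrite S_INR in H0.
  assert (IZR (up s) <= INR (Z.to_nat (up s))).
  { destruct (Z_le_gt_dec 0 (up s)).
    - rewrite INR_IZR_INZ, Z2Nat.id by exact l; lra.
    - pose proof (pos_INR (Z.to_nat (up s))). apply Z.gt_lt, IZR_lt in g. lra. }
  lra.
Qed.

Lemma idx_unique : forall k i j s, tt k i <= s < tt k (S i) -> tt k j <= s < tt k (S j) -> i = j.
Proof.
  intros k i j s Hi Hj.
  destruct (Nat.lt_trichotomy i j) as [H|[H|H]]; auto.
  - pose proof (tt_lt k i j H); lra.
  - pose proof (tt_lt k j i H); lra.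
Qed.

Lemma idx_spec : forall k s, 0 <= s -> tt k (idx k s) <= s < tt k (S (idx k s)).
Proof. intros; unfold idx; apply epsilon_spec, exists_idx; auto. Qed.

Definition Pray k s : Pt :=
  if Rle_dec 0 s then ptat k (idx k s) (s - tt k (idx k s)) else o_pt.

Lemma ptat_valid : forall k j u, 0 <= u < NR k j + 1 -> valid_pt (ptat k j u).
Proof.
  intros k j u H. unfold ptat. destruct (Rle_dec u (NR k j)); simpl.
  - apply valid_w.
  - split; [rewrite <- w_S; apply valid_w | lra].
Qed.

Lemma Pray_valid : forall k s, valid_pt (Pray k s).
Proof.
  intros k s. unfold Pray. destruct (Rle_dec 0 s); [|simpl; exact I].
  apply ptat_valid. pose proof (idx_spec k s r). rewrite tt_S in H. lra.
Qed.

Definition gray k s : XA := exist valid_pt (Pray k s) (Pray_valid k s).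

Lemma Pray_eq : forall k j u, 0 <= u < NR k j + 1 -> Pray k (tt k j + u) = ptat k j u.
Proof.
  intros k j u H. unfold Pray. pose proof (tt_pos k j).
  destruct (Rle_dec 0 (tt k j + u)); [|lra].
  assert (idx k (tt k j + u) = j) as E.
  { apply (idx_unique k _ _ (tt k j + u)); [apply idx_spec; lra|]. rewrite tt_S; lra. }
  rewrite E. f_equal. ring.
Qed.

Lemma Pray_form : forall k s, 0 <= s ->
  exists j u, s = tt k j + u /\ 0 <= u < NR k j + 1 /\ Pray k s = ptat k j u.
Proof.
  intros k s Hs. exists (idx k s), (s - tt k (idx k s)).
  pose proof (idx_spec k s Hs). rewrite tt_S in H.
  split; [ring|split; [lra|]].
  unfold Pray. destruct (Rle_dec 0 s); [reflexivity|lra].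
Qed.

Lemma Pray_0 : forall k, Pray k 0 = o_pt.
Proof.
  intros k. replace 0 with (tt k 0 + 0) by (simpl; ring).
  rewrite Pray_eq by (pose proof (NR_pos k 0); lra).
  unfold ptat. destruct (Rle_dec 0 (NR k 0)); [reflexivity|pose proof (NR_pos k 0); lra].
Qed.


Definition is_EP (p : Pt) : Prop := match p with EP _ _ _ => True | _ => False end.

Lemma pdist_gen : forall p q A B, lcp_rest (full p) (full q) = (A, B) ->
  ~ (A = [] /\ B = [] /\ is_EP p /\ is_EP q) ->
  pdist p q = snd (pos_off p A) + dist2 (fst (pos_off p A)) (fst (pos_off q B)) + snd (pos_off q B).
Proof.
  intros p q A B E H. unfold pdist. cbv zeta. rewrite E. simpl.
  destruct p, q; simpl in H; auto.
  destruct A; auto. destruct B; auto. exfalso; tauto.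
Qed.

Lemma pdist_EE : forall c1 l1 t1 c2 l2 t2,
  lcp_rest (c1 ++ [l1]) (c2 ++ [l2]) = ([], []) ->
  pdist (EP c1 l1 t1) (EP c2 l2 t2) = Rabs (t1 - t2).
Proof. intros. unfold pdist. cbv zeta. simpl full. rewrite H. reflexivity. Qed.

Lemma lcp_lo : forall k J m rest, (m <= J)%nat ->
  lcp_rest (w k J ++ rest) (w k m) = (W k m (J - m) ++ rest, []).
Proof.
  intros. rewrite (w_split k m J H), <- app_assoc.
  rewrite <- (app_nil_r (w k m)) at 2. rewrite lcp_app. apply lcp_nil_r.
Qed.

Definition hdc k J (rest : list Letter) := forall l r', rest = l :: r' -> l <> rl k J.

Lemma lcp_hi : forall k J m rest, (J < m)%nat -> hdc k J rest ->
  lcp_rest (w k J ++ rest) (w k m) = (rest, W k J (m - J)).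
Proof.
  intros k J m rest H Hd. rewrite (w_split k J m) by lia. rewrite lcp_app.
  replace (m - J)%nat with (S (m - J - 1)) by lia. rewrite W_S.
  destruct rest as [|l r']; [reflexivity|]. simpl.
  rewrite letter_eqb_false; [reflexivity|]. apply (Hd l r'); reflexivity.
Qed.

Definition hx (x : Pt) (rest : list Letter) := u_up x + F rest.

Lemma full_EP : forall k m t, full (EP (w k m) (rl k m) t) = w k (S m).
Proof. intros; simpl; rewrite w_S; reflexivity. Qed.

Lemma d_lo_flat : forall k x J rest m a, full x = w k J ++ rest -> (m < J)%nat ->
  0 <= a <= NR k m ->
  pdist x (FP (w k m) a 0) = hx x rest + tt k J - 1 - (tt k m + a).
Proof.
  intros k x J rest m a Hf Hm Ha.
  rewrite (pdist_gen x _ (W k m (J - m) ++ rest) []).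
  2:{ rewrite Hf. apply lcp_lo; lia. }
  2:{ simpl; tauto. }
  replace (J - m)%nat with (S (J - S m)) by lia. rewrite W_S. simpl.
  rewrite climb_F; simpl. rewrite F_app, F_W, hR_rl, dist2_x0.
  replace (S m + (J - S m))%nat with J by lia. rewrite Rabs_right by lra.
  unfold hx. rewrite tt_S. ring.
Qed.

Lemma d_lo_edge : forall k x J rest m t, full x = w k J ++ rest -> (S m < J)%nat ->
  pdist x (EP (w k m) (rl k m) t) = hx x rest + tt k J - 1 - (tt k m + NR k m + t).
Proof.
  intros k x J rest m t Hf Hm.
  rewrite (pdist_gen x _ (W k (S m) (J - S m) ++ rest) []).
  2:{ rewrite Hf, full_EP. apply lcp_lo; lia. }
  2:{ intros [H _]. destruct (J - S m)%nat eqn:E; [lia|]. discriminate. }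
  replace (J - S m)%nat with (S (J - S (S m))) by lia. rewrite W_S. simpl.
  rewrite climb_F; simpl. rewrite F_app, F_W, hR_rl.
  replace (S (S m) + (J - S (S m)))%nat with J by lia.
  unfold dist2, hx; simpl. replace (NR k (S m) - 0) with (NR k (S m)) by ring.
  replace (0 - 0) with 0 by ring. rewrite norm2_x0, Rabs_right by (apply Rle_ge, NR_pos).
  unfold NR; simpl tt; ring.
Qed.

Definition gen (x : Pt) (rest : list Letter) := ~ (rest = [] /\ is_EP x).

Lemma dist2_0 : forall v, dist2 v (0, 0) = norm2 v.
Proof. intros [a b]; unfold dist2; simpl; rewrite !Rminus_0_r; reflexivity. Qed.

Lemma h_gen : forall x rest, gen x rest ->
  hx x rest = snd (pos_off x rest) + dist2 (fst (pos_off x rest)) (0, 0) + 1.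
Proof.
  intros x [|l r'] G; rewrite dist2_0; unfold hx.
  - destruct x; simpl in *; [|exfalso; apply G; split; [reflexivity|exact I]]. ring.
  - simpl. rewrite climb_F. simpl. ring.
Qed.

Lemma d_E_gen : forall k x J rest m t, full x = w k J ++ rest -> J = S m -> gen x rest ->
  pdist x (EP (w k m) (rl k m) t) = hx x rest - t.
Proof.
  intros k x J rest m t Hf HJ G.
  rewrite (pdist_gen x _ rest []).
  2:{ rewrite Hf, full_EP, <- HJ. rewrite <- (app_nil_r (w k J)) at 2.
      rewrite lcp_app. apply lcp_nil_r. }
  2:{ intros [H1 [_ [H2 _]]]. apply G; auto. }
  rewrite h_gen by auto. simpl. ring.
Qed.

Lemma d_E_edge : forall k c l tx J m t, c ++ [l] = w k J -> J = S m ->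
  pdist (EP c l tx) (EP (w k m) (rl k m) t) = Rabs (tx - t).
Proof.
  intros. apply pdist_EE. rewrite H, <- w_S, <- H0.
  rewrite <- (app_nil_r (w k J)). rewrite lcp_app. reflexivity.
Qed.

Lemma d_mid : forall k x J rest a, full x = w k J ++ rest ->
  pdist x (FP (w k J) a 0) = snd (pos_off x rest) + dist2 (fst (pos_off x rest)) (a, 0).
Proof.
  intros k x J rest a Hf.
  rewrite (pdist_gen x _ rest []).
  2:{ rewrite Hf. change (full (FP (w k J) a 0)) with (w k J).
      rewrite <- (app_nil_r (w k J)) at 2.
      rewrite lcp_app. apply lcp_nil_r. }
  2:{ simpl; tauto. }
  simpl. ring.
Qed.

Lemma d_hi_edge : forall k x J rest t, full x = w k J ++ rest -> hdc k J rest ->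
  pdist x (EP (w k J) (rl k J) t) =
  snd (pos_off x rest) + dist2 (fst (pos_off x rest)) (NR k J, 0) + t.
Proof.
  intros k x J rest t Hf Hd.
  rewrite (pdist_gen x _ rest (W k J (S J - J))).
  2:{ rewrite Hf, full_EP. apply lcp_hi; auto. }
  2:{ replace (S J - J)%nat with 1%nat by lia. intros [_ [H _]]; discriminate. }
  replace (S J - J)%nat with 1%nat by lia. simpl. rewrite hR_rl. change (climb (W k J 1)) with 0. ring.
Qed.

Lemma d_hi_flat : forall k x J rest m a, full x = w k J ++ rest -> hdc k J rest -> (J < m)%nat ->
  0 <= a ->
  pdist x (FP (w k m) a 0) =
  snd (pos_off x rest) + dist2 (fst (pos_off x rest)) (NR k J, 0) + (a + 1 + tt k m - tt k (S J)).
Proof.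
  intros k x J rest m a Hf Hd Hm Ha.
  rewrite (pdist_gen x _ rest (W k J (m - J))).
  2:{ rewrite Hf. apply lcp_hi; auto. }
  2:{ simpl; tauto. }
  replace (m - J)%nat with (S (m - S J)) by lia. rewrite W_S. simpl.
  rewrite climb_F; simpl. rewrite F_W, hR_rl, norm2_x0, Rabs_right by lra.
  replace (S J + (m - S J))%nat with m by lia. unfold NR; simpl tt; ring.
Qed.

Lemma d_hi_edge2 : forall k x J rest m t, full x = w k J ++ rest -> hdc k J rest -> (J < m)%nat ->
  pdist x (EP (w k m) (rl k m) t) =
  snd (pos_off x rest) + dist2 (fst (pos_off x rest)) (NR k J, 0) + (t + tt k (S m) - tt k (S J)).
Proof.
  intros k x J rest m t Hf Hd Hm.
  rewrite (pdist_gen x _ rest (W k J (S m - J))).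
  2:{ rewrite Hf, full_EP. apply lcp_hi; auto. }
  2:{ replace (S m - J)%nat with (S (m - J)) by lia. intros [_ [H _]]; discriminate. }
  replace (S m - J)%nat with (S (m - J)) by lia. rewrite W_S. simpl.
  rewrite climb_F; simpl. rewrite F_W, hR_rl.
  replace (S J + (m - J))%nat with (S m) by lia. unfold NR; simpl tt; ring.
Qed.


Lemma j_lt_of : forall k j J u s, s = tt k j + u -> 0 <= u -> s < tt k J -> (j < J)%nat.
Proof.
  intros. destruct (Nat.lt_ge_cases j J); auto. pose proof (tt_mono k J j H2). lra.
Qed.

Lemma M_lo_gen : forall k x J rest s, full x = w k J ++ rest -> gen x rest -> 0 <= s ->
  s < tt k J -> pdist x (Pray k s) = hx x rest + tt k J - 1 - s.
Proof.
  intros k x J rest s Hf G Hs Hlt.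
  destruct (Pray_form k s Hs) as [j [u [Es [Hu EP]]]]. rewrite EP.
  pose proof (j_lt_of k j J u s Es (proj1 Hu) Hlt) as HjJ.
  unfold ptat. destruct (Rle_dec u (NR k j)).
  - rewrite (d_lo_flat k x J rest j u); auto; [rewrite Es; ring|lra].
  - destruct (Nat.lt_ge_cases (S j) J).
    + rewrite (d_lo_edge k x J rest j); auto. rewrite Es; ring.
    + rewrite (d_E_gen k x J rest j _ Hf) by (auto; lia).
      replace J with (S j) by lia. rewrite tt_S, Es. ring.
Qed.

Lemma M_lo_edge : forall k c l tx J s, valid_pt (EP c l tx) -> c ++ [l] = w k J -> 0 <= s ->
  s < tt k J -> pdist (EP c l tx) (Pray k s) = Rabs (tt k J - 1 + tx - s).
Proof.
  intros k c l tx J s Hv Hf Hs Hlt. simpl in Hv.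
  assert (Hf' : full (EP c l tx) = w k J ++ []) by (simpl; rewrite app_nil_r; auto).
  destruct (Pray_form k s Hs) as [j [u [Es [Hu EP]]]]. rewrite EP.
  pose proof (j_lt_of k j J u s Es (proj1 Hu) Hlt) as HjJ.
  pose proof (tt_lt k j J HjJ). rewrite tt_S in H.
  unfold ptat. destruct (Rle_dec u (NR k j)).
  - rewrite (d_lo_flat k _ J [] j u); auto; [|lra]. unfold hx; simpl.
    rewrite Rabs_right; [rewrite Es; ring|]. lra.
  - destruct (Nat.lt_ge_cases (S j) J).
    + rewrite (d_lo_edge k _ J [] j); auto. unfold hx; simpl.
      pose proof (tt_lt k (S j) J H0). rewrite !tt_S in H1. pose proof (NR_pos k (S j)).
      rewrite Rabs_right; [rewrite Es; ring|]. lra.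
    + rewrite (d_E_edge k c l tx J j) by (auto; lia).
      f_equal. replace J with (S j) by lia. rewrite tt_S, Es. ring.
Qed.

Lemma M_mid : forall k x J rest s, full x = w k J ++ rest ->
  tt k J <= s <= tt k J + NR k J ->
  pdist x (Pray k s) = snd (pos_off x rest) + dist2 (fst (pos_off x rest)) (s - tt k J, 0).
Proof.
  intros k x J rest s Hf Hs.
  replace s with (tt k J + (s - tt k J)) at 1 by ring.
  rewrite Pray_eq by lra. unfold ptat.
  destruct (Rle_dec (s - tt k J) (NR k J)); [|lra].
  apply d_mid; auto.
Qed.

Lemma M_hi : forall k x J rest s, full x = w k J ++ rest -> hdc k J rest ->
  tt k J + NR k J < s ->
  pdist x (Pray k s) = snd (pos_off x rest) + dist2 (fst (pos_off x rest)) (NR k J, 0)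
                       + (s - tt k J - NR k J).
Proof.
  intros k x J rest s Hf Hd Hs.
  assert (0 <= s) by (pose proof (tt_pos k J); pose proof (NR_pos k J); lra).
  destruct (Pray_form k s H) as [j [u [Es [Hu EP]]]]. rewrite EP.
  assert (HjJ : (J <= j)%nat).
  { destruct (Nat.lt_ge_cases j J); auto. pose proof (tt_lt k j J H0). rewrite tt_S in H1. pose proof (NR_pos k J). lra. }
  unfold ptat. destruct (Rle_dec u (NR k j)).
  - destruct (Nat.eq_dec j J); [subst; lra|].
    rewrite (d_hi_flat k x J rest j u); auto; [|lia|lra].
    rewrite tt_S, Es. ring.
  - destruct (Nat.eq_dec j J).
    + subst. rewrite (d_hi_edge k x J rest); auto. ring.
    + rewrite (d_hi_edge2 k x J rest j); auto; [|lia]. rewrite !tt_S, Es. ring.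
Qed.


Lemma decomp_gen : forall k f m, exists J rest, f = W k m J ++ rest /\ hdc k (m + J) rest.
Proof.
  intros k f; induction f as [|a f IH]; intros m.
  - exists 0%nat, []. split; [reflexivity|]. intros l r' H; discriminate.
  - destruct (classic (a = rl k m)) as [E|E].
    + destruct (IH (S m)) as [J [rest [H1 H2]]]. exists (S J), rest.
      split; [rewrite W_S; simpl; rewrite E, H1; reflexivity|].
      replace (m + S J)%nat with (S m + J)%nat by lia. auto.
    + exists 0%nat, (a :: f). split; [reflexivity|].
      intros l r' H; inversion H; subst. rewrite Nat.add_0_r; auto.
Qed.

Lemma decomp : forall k f, exists J rest, f = w k J ++ rest /\ hdc k J rest.
Proof. intros. apply (decomp_gen k f 0). Qed.

Lemma onray_FP_dist : forall k J a s, 0 <= a <= NR k J -> 0 <= s ->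
  pdist (FP (w k J) a 0) (Pray k s) = Rabs (tt k J + a - s).
Proof.
  intros k J a s Ha Hs.
  assert (Hf : full (FP (w k J) a 0) = w k J ++ []) by (simpl; rewrite app_nil_r; auto).
  destruct (Rlt_dec s (tt k J)).
  - rewrite (M_lo_gen k _ J []) by (auto; intros [_ H]; exact H).
    unfold hx; simpl. rewrite norm2_x0, Rabs_right by lra. rewrite Rabs_right by lra. ring.
  - destruct (Rle_dec s (tt k J + NR k J)).
    + rewrite (M_mid k _ J []) by (auto; lra). simpl. rewrite dist2_x0, Rplus_0_l.
      f_equal; ring.
    + rewrite (M_hi k _ J []) by (auto; try lra; intros l1 r1 H1; discriminate). simpl.
      rewrite dist2_x0. rewrite Rabs_left1 by lra. rewrite Rabs_left1 by lra. ring.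
Qed.

Lemma onray_EP_dist : forall k c l tx J s, valid_pt (EP c l tx) -> c ++ [l] = w k J -> 0 <= s ->
  pdist (EP c l tx) (Pray k s) = Rabs (tt k J - 1 + tx - s).
Proof.
  intros k c l tx J s Hv Hf Hs.
  assert (Hf' : full (EP c l tx) = w k J ++ []) by (simpl; rewrite app_nil_r; auto).
  simpl in Hv.
  destruct (Rlt_dec s (tt k J)).
  - apply M_lo_edge; auto.
  - destruct (Rle_dec s (tt k J + NR k J)).
    + rewrite (M_mid k _ J []) by (auto; lra). simpl. rewrite dist2_x0.
      rewrite Rabs_left1 by lra. rewrite Rabs_left1 by lra. ring.
    + rewrite (M_hi k _ J []) by (auto; try lra; intros l1 r1 H1; discriminate). simpl.
      rewrite dist2_x0. rewrite Rabs_left1 by (pose proof (NR_pos k J); lra).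
      rewrite Rabs_left1 by lra. ring.
Qed.

Definition clampv k J (e : R * R) := Rmax 0 (Rmin (fst e) (NR k J)).

Lemma clamp_range : forall k J e, 0 <= clampv k J e <= NR k J.
Proof.
  intros. unfold clampv. pose proof (NR_pos k J).
  unfold Rmax, Rmin; repeat destruct Rle_dec; lra.
Qed.

Lemma clamp_min : forall k J e a, 0 <= a <= NR k J ->
  dist2 e (clampv k J e, 0) <= dist2 e (a, 0).
Proof.
  intros k J [e1 e2] a Ha. unfold dist2, norm2, clampv; simpl.
  apply sqrt_le_1_alt. apply Rplus_le_compat_r.
  set (c := Rmax 0 (Rmin e1 (NR k J))).
  assert (Hc : (c = e1) \/ (c = 0 /\ e1 <= 0) \/ (c = NR k J /\ NR k J <= e1)).
  { unfold c, Rmax, Rmin; repeat destruct Rle_dec; try lra. }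
  destruct Hc as [H|[[H H']|[H H']]]; rewrite H.
  - replace (e1 - e1) with 0 by ring. rewrite Rmult_0_l. apply Rle_0_sqr.
  - assert (0 <= - e1 * a) by (apply Rmult_le_pos; lra). nra.
  - assert (0 <= (e1 - NR k J) * (NR k J - a)) by (apply Rmult_le_pos; lra). nra.
Qed.

Definition rstar k x J rest :=
  snd (pos_off x rest) + dist2 (fst (pos_off x rest)) (clampv k J (fst (pos_off x rest)), 0).

Definition offray k x J rest :=
  gen x rest /\ ~ (rest = [] /\ exists a, x = FP (w k J) a 0 /\ 0 <= a <= NR k J).

Lemma off_lower : forall k x J rest s, full x = w k J ++ rest -> hdc k J rest ->
  offray k x J rest -> 0 <= s ->
  rstar k x J rest <= pdist x (Pray k s) /\
  (pdist x (Pray k s) <= rstar k x J rest -> tt k J <= s <= tt k J + NR k J).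
Proof.
  intros k x J rest s Hf Hd [G _] Hs. unfold rstar.
  set (e := fst (pos_off x rest)). set (d := snd (pos_off x rest)).
  pose proof (clamp_min k J e 0) as C0. pose proof (clamp_min k J e (NR k J)) as CN.
  pose proof (NR_pos k J).
  destruct (Rlt_dec s (tt k J)).
  - rewrite (M_lo_gen k x J rest s) by auto. rewrite h_gen by auto. fold e d.
    specialize (C0 ltac:(lra)). split; intros; lra.
  - destruct (Rle_dec s (tt k J + NR k J)).
    + rewrite (M_mid k x J rest s) by (auto; lra). fold e d.
      pose proof (clamp_min k J e (s - tt k J) ltac:(lra)). split; intros; lra.
    + rewrite (M_hi k x J rest s) by (auto; lra). fold e d.
      specialize (CN ltac:(lra)). split; intros; lra.
Qed.

Lemma off_attain : forall k x J rest, full x = w k J ++ rest ->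
  pdist x (Pray k (tt k J + clampv k J (fst (pos_off x rest)))) = rstar k x J rest.
Proof.
  intros. pose proof (clamp_range k J (fst (pos_off x rest))).
  rewrite (M_mid k x J rest) by (auto; lra). unfold rstar. f_equal. f_equal. f_equal. ring.
Qed.

Lemma off_pos : forall k x J rest, valid_pt x -> full x = w k J ++ rest ->
  offray k x J rest -> 0 < rstar k x J rest.
Proof.
  intros k x J rest Hv Hf [G N]. unfold rstar.
  pose proof (dist2_pos (fst (pos_off x rest)) (clampv k J (fst (pos_off x rest)), 0)).
  destruct rest as [|l r'].
  - destruct x as [c a b|c l t]; [|exfalso; apply G; split; [reflexivity|exact I]].
    simpl in Hf. rewrite app_nil_r in Hf. subst c. simpl.
    rewrite Rplus_0_l. unfold dist2, norm2; simpl. apply sqrt_lt_R0.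
    pose proof (clamp_range k J (a, b)).
    destruct (Req_dec b 0).
    + subst b. assert (a <> clampv k J (a, 0)).
      { intros E. apply N. split; auto. exists a. split; auto. rewrite E; auto. }
      assert (Hn : a - clampv k J (a, 0) <> 0) by lra.
      pose proof (Rsqr_pos_lt _ Hn) as Hq. unfold Rsqr in Hq. rewrite Rminus_0_r, Rmult_0_l, Rplus_0_r. exact Hq.
    + match goal with Hb : b <> 0 |- _ => pose proof (Rsqr_pos_lt _ Hb) as Hq end.
      unfold Rsqr in Hq. rewrite Rminus_0_r. apply Rplus_le_lt_0_compat; [apply Rle_0_sqr|exact Hq].
  - assert (0 < snd (pos_off x (l :: r'))).
    { simpl. rewrite climb_F. pose proof (u_up_pos x Hv). pose proof (F_pos (tl (l :: r'))). lra. }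
    lra.
Qed.


Lemma lcp_cross : forall k J J' rest rest', (J < J')%nat -> hdc k J rest ->
  lcp_rest (w k J ++ rest) (w k J' ++ rest') = (rest, W k J (J' - J) ++ rest').
Proof.
  intros k J J' rest rest' H Hd. rewrite (w_split k J J') by lia. rewrite <- app_assoc, lcp_app.
  replace (J' - J)%nat with (S (J' - J - 1)) by lia. rewrite W_S. simpl.
  destruct rest as [|l r']; [reflexivity|]. simpl.
  rewrite letter_eqb_false; [reflexivity|]. apply (Hd l r'); reflexivity.
Qed.

Lemma cross_hi : forall k x y J rest J' rest', valid_pt y ->
  full x = w k J ++ rest -> hdc k J rest -> full y = w k J' ++ rest' -> (J < J')%nat ->
  snd (pos_off x rest) + dist2 (fst (pos_off x rest)) (NR k J, 0) < pdist x y.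
Proof.
  intros k x y J rest J' rest' Hv Hx Hd Hy H.
  rewrite (pdist_gen x y rest (W k J (J' - J) ++ rest')).
  2:{ rewrite Hx, Hy. apply lcp_cross; auto. }
  2:{ replace (J' - J)%nat with (S (J' - J - 1)) by lia. intros [_ [E _]]; discriminate. }
  replace (J' - J)%nat with (S (J' - J - 1)) by lia. rewrite W_S. simpl.
  rewrite hR_rl. rewrite climb_F. pose proof (u_up_pos y Hv).
  pose proof (F_pos (tl (rl k J :: W k (S J) (J' - J - 1) ++ rest'))). lra.
Qed.

Lemma cross_lo : forall k x y J rest J' rest', valid_pt y -> gen x rest ->
  full x = w k J ++ rest -> full y = w k J' ++ rest' -> hdc k J' rest' -> (J' < J)%nat ->
  snd (pos_off x rest) + dist2 (fst (pos_off x rest)) (0, 0) < pdist x y.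
Proof.
  intros k x y J rest J' rest' Hv G Hx Hy Hd H.
  rewrite (pdist_gen x y (W k J' (J - J') ++ rest) rest').
  2:{ rewrite Hx, Hy, lcp_swap, lcp_cross; auto. }
  2:{ replace (J - J')%nat with (S (J - J' - 1)) by lia. intros [E _]; discriminate. }
  pose proof (h_gen x rest G). unfold hx in H0.
  replace (J - J')%nat with (S (J - J' - 1)) by lia. rewrite W_S.
  pose proof (pos_off_pos y rest' Hv).
  pose proof (dist2_pos (fst (pos_off x (rl k J' :: W k (S J') (J - J' - 1) ++ rest)))
                        (fst (pos_off y rest'))).
  assert (snd (pos_off x (rl k J' :: W k (S J') (J - J' - 1) ++ rest)) =
          u_up x + F rest + (tt k J - tt k (S J'))).
  { simpl. rewrite climb_F; simpl. rewrite F_app, F_W.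
    replace (S J' + (J - J' - 1))%nat with J by lia. rewrite tt_S; unfold NR; ring. }
  pose proof (tt_mono k (S J') J ltac:(lia)). change ((rl k J' :: W k (S J') (J - J' - 1)) ++ rest) with (rl k J' :: (W k (S J') (J - J' - 1) ++ rest)). lra.
Qed.


Definition onray_at k (y : Pt) (J : nat) (sy : R) :=
  0 <= sy /\ Pray k sy = y /\ tt k J - 1 <= sy <= tt k J + NR k J /\
  forall s, 0 <= s -> pdist y (Pray k s) = Rabs (sy - s).

Lemma tt_S_ge1 : forall k m, 1 <= tt k (S m).
Proof. intros; rewrite tt_S; pose proof (tt_pos k m); pose proof (NR_pos k m); lra. Qed.

Lemma classify : forall k y, valid_pt y -> exists J rest,
  full y = w k J ++ rest /\ hdc k J rest /\
  ((exists sy, onray_at k y J sy) \/ offray k y J rest).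
Proof.
  intros k y Hv. destruct (decomp k (full y)) as [J [rest [Hf Hd]]].
  exists J, rest. split; auto. split; auto.
  destruct rest as [|l0 r0].
  2:{ right. split; [intros [E _]; discriminate|intros [E _]; discriminate]. }
  rewrite app_nil_r in Hf.
  destruct y as [c a b|c l t].
  - simpl in Hf. subst c.
    destruct (classic (b = 0 /\ 0 <= a <= NR k J)) as [[Hb Ha]|N].
    + left. subst b. exists (tt k J + a). split; [pose proof (tt_pos k J); lra|].
      split; [rewrite Pray_eq by lra; unfold ptat; destruct Rle_dec; [reflexivity|lra]|].
      split; [lra|]. intros s Hs. rewrite onray_FP_dist by auto. reflexivity.
    + right. split; [intros [_ E]; exact E|].
      intros [_ [a' [E Ha']]]. injection E; intros; subst. apply N; auto.
  - simpl in Hf. simpl in Hv.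
    destruct J as [|m]; [destruct c; discriminate|].
    rewrite w_S in Hf. apply app_inj_tail in Hf. destruct Hf as [Hc Hl]; subst c l.
    left. exists (tt k (S m) - 1 + t).
    pose proof (tt_S_ge1 k m). pose proof (NR_pos k (S m)).
    split; [lra|]. split.
    { replace (tt k (S m) - 1 + t) with (tt k m + (NR k m + t)) by (rewrite tt_S; ring).
      rewrite Pray_eq by (pose proof (NR_pos k m); lra). unfold ptat.
      destruct Rle_dec; [lra|]. f_equal; ring. }
    split; [lra|]. intros s Hs. apply onray_EP_dist; auto. rewrite w_S; reflexivity.
Qed.

Lemma Pray_dist : forall k s t, 0 <= s -> 0 <= t -> pdist (Pray k s) (Pray k t) = Rabs (s - t).
Proof.
  intros k s t Hs Ht.
  destruct (Pray_form k s Hs) as [j [u [Es [Hu Ep]]]]. rewrite Ep. unfold ptat.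
  destruct (Rle_dec u (NR k j)).
  - rewrite onray_FP_dist by (auto; lra). rewrite Es; reflexivity.
  - rewrite (onray_EP_dist k _ _ _ (S j)); auto.
    + f_equal. rewrite tt_S, Es. ring.
    + simpl. split; [rewrite <- w_S; apply valid_w|lra].
    + rewrite w_S; reflexivity.
Qed.

Lemma geodesic_gray : forall k, geodesic_ray (gray k).
Proof.
  intros k. split; [simpl; apply Pray_0|].
  intros s t Hs Ht. unfold dX; simpl. apply Pray_dist; auto.
Qed.


Lemma Rabs_le0 : forall x, Rabs x <= 0 -> x = 0.
Proof. intros x H. unfold Rabs in H. destruct Rcase_abs; lra. Qed.

Lemma proj_loc : forall k (y q : XA), proj_pt (on_ray (gray k)) y q ->
  exists s2, 0 <= s2 /\ q = gray k s2 /\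
  forall s, 0 <= s -> pdist (proj1_sig y) (Pray k s2) <= pdist (proj1_sig y) (Pray k s).
Proof.
  intros k y q [[s2 [Hs Eq]] [r [[H1 H2] H3]]]. exists s2. subst q.
  split; auto. split; auto. intros s Hs'.
  change (pdist (proj1_sig y) (Pray k s2)) with (dX y (gray k s2)). rewrite H3.
  apply (H1 (gray k s)). exists s; auto.
Qed.

Lemma proj_on : forall k (y q : XA) J sy, onray_at k (proj1_sig y) J sy ->
  proj_pt (on_ray (gray k)) y q -> q = gray k sy.
Proof.
  intros k y q J sy [H0 [H1 [H2 H3]]] Hp.
  destruct (proj_loc k y q Hp) as [s2 [Hs2 [Eq Hm]]]. subst q.
  specialize (Hm sy H0). rewrite !H3 in Hm by auto.
  replace (sy - sy) with 0 in Hm by ring. rewrite Rabs_R0 in Hm.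
  pose proof (Rabs_pos (sy - s2)).
  assert (sy - s2 = 0) by (apply Rabs_le0; lra). replace s2 with sy by lra. reflexivity.
Qed.

Lemma proj_off : forall k (y q : XA) J rest, full (proj1_sig y) = w k J ++ rest -> hdc k J rest ->
  offray k (proj1_sig y) J rest ->
  proj_pt (on_ray (gray k)) y q -> exists s2, q = gray k s2 /\ tt k J <= s2 <= tt k J + NR k J.
Proof.
  intros k y q J rest Hf Hd Off Hp.
  destruct (proj_loc k y q Hp) as [s2 [Hs2 [Eq Hm]]]. exists s2. split; auto.
  pose proof (clamp_range k J (fst (pos_off (proj1_sig y) rest))).
  specialize (Hm (tt k J + clampv k J (fst (pos_off (proj1_sig y) rest)))
                 ltac:(pose proof (tt_pos k J); lra)).
  rewrite off_attain in Hm by auto.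
  apply (proj2 (off_lower k _ J rest s2 Hf Hd Off Hs2)). auto.
Qed.

Lemma proj_any : forall k (y q : XA), proj_pt (on_ray (gray k)) y q ->
  forall J rest, full (proj1_sig y) = w k J ++ rest -> hdc k J rest ->
  ((exists sy, onray_at k (proj1_sig y) J sy) \/ offray k (proj1_sig y) J rest) ->
  exists s2, 0 <= s2 /\ q = gray k s2 /\ tt k J - 1 <= s2 <= tt k J + NR k J.
Proof.
  intros k y q Hp J rest Hf Hd [[sy Ho]|Off].
  - exists sy. split; [destruct Ho; auto|]. split; [eapply proj_on; eauto|]. destruct Ho as [_ [_ [H _]]]; auto.
  - destruct (proj_off k y q J rest Hf Hd Off Hp) as [s2 [E H]]. exists s2.
    split; [pose proof (tt_pos k J); lra|]. split; auto; lra.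
Qed.

Lemma dist_on : forall k (x : XA) J sx, onray_at k (proj1_sig x) J sx ->
  is_dist_to (on_ray (gray k)) x 0.
Proof.
  intros k x J sx [H0 [H1 [H2 H3]]]. split.
  - intros z [s [Hs E]]. subst z. unfold dX; simpl. rewrite H3 by auto. apply Rabs_pos.
  - intros eps He. exists (gray k sx). split; [exists sx; auto|].
    unfold dX; simpl. rewrite H3 by auto. replace (sx - sx) with 0 by ring. rewrite Rabs_R0. lra.
Qed.

Lemma dist_off : forall k (x : XA) J rest, full (proj1_sig x) = w k J ++ rest -> hdc k J rest ->
  offray k (proj1_sig x) J rest ->
  is_dist_to (on_ray (gray k)) x (rstar k (proj1_sig x) J rest).
Proof.
  intros k x J rest Hf Hd Off. split.
  - intros z [s [Hs E]]. subst z. unfold dX; simpl.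
    apply (proj1 (off_lower k _ J rest s Hf Hd Off Hs)).
  - intros eps He. pose proof (clamp_range k J (fst (pos_off (proj1_sig x) rest))).
    exists (gray k (tt k J + clampv k J (fst (pos_off (proj1_sig x) rest)))).
    split; [eexists; split; [|reflexivity]; pose proof (tt_pos k J); lra|].
    unfold dX; simpl. rewrite off_attain by auto. lra.
Qed.

Lemma nn_le : forall k t, 1 <= k t -> INR (nn k t) <= k t.
Proof.
  intros k t H. unfold nn. destruct (base_Int_part (k t)) as [H1 H2].
  destruct (Z_le_gt_dec 0 (Int_part (k t))).
  - rewrite INR_IZR_INZ, Z2Nat.id by exact l. auto.
  - destruct (Int_part (k t)); try lia. simpl. lra.
Qed.

Lemma nrm_ge : forall k (x : XA) J rest, full (proj1_sig x) = w k J ++ rest ->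
  gen (proj1_sig x) rest -> tt k J <= nrm x.
Proof.
  intros k x J rest Hf G. pose proof (nrm_pos x).
  destruct (Rlt_dec 0 (tt k J)).
  - unfold nrm, dX. change (proj1_sig o) with o_pt. rewrite pdist_sym, <- (Pray_0 k).
    rewrite (M_lo_gen k _ J rest 0) by (auto; lra). rewrite h_gen by auto.
    pose proof (pos_off_pos (proj1_sig x) rest (proj2_sig x)).
    pose proof (dist2_pos (fst (pos_off (proj1_sig x) rest)) (0, 0)). lra.
  - pose proof (tt_pos k J). lra.
Qed.

Lemma contracting_gray : forall k, admissible k -> contracting k (on_ray (gray k)).
Proof.
  intros k [Hk1 [Hkm _]]. exists 2. intros x y Hxy p q Hp Hq.
  pose proof (nrm_pos x) as Hn.
  pose proof (Hk1 (nrm x) Hn) as Hkx.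
  destruct (classify k (proj1_sig x) (proj2_sig x)) as [J [rest [Hf [Hd [[sx Ho]|Off]]]]].
  -
    pose proof (Hxy 0 (dist_on k x J sx Ho)) as Hxy0.
    destruct Ho as [Hs0 [HP [Hr Hd0]]].
    destruct (classify k (proj1_sig y) (proj2_sig y)) as [J' [rest' [Hf' [Hd' [[sy Ho']|Off']]]]].
    + assert (E : sy = sx).
      { unfold dX in Hxy0. rewrite <- HP, pdist_sym in Hxy0.
        destruct Ho' as [_ [_ [_ H3]]]. rewrite H3 in Hxy0 by auto.
        pose proof (Rabs_pos (sy - sx)). assert (sy - sx = 0) by (apply Rabs_le0; lra). lra. }
      subst sy.
      assert (Ho : onray_at k (proj1_sig x) J sx) by (split; auto).
      assert (forall z, proj_pt (on_ray (gray k)) x z \/ proj_pt (on_ray (gray k)) y z ->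
                z = gray k sx) as Hz.
      { intros z [Hz|Hz]; [eapply proj_on; [exact Ho|exact Hz]|eapply proj_on; [exact Ho'|exact Hz]]. }
      rewrite (Hz p Hp), (Hz q Hq). unfold dX; simpl proj1_sig. rewrite Pray_dist by auto.
      replace (sx - sx) with 0 by ring. rewrite Rabs_R0. lra.
    + exfalso. unfold dX in Hxy0. rewrite <- HP, pdist_sym in Hxy0.
      pose proof (off_pos k _ J' rest' (proj2_sig y) Hf' Off').
      pose proof (proj1 (off_lower k _ J' rest' sx Hf' Hd' Off' Hs0)). lra.
  -
    pose proof (Hxy _ (dist_off k x J rest Hf Hd Off)) as Hxy0.
    set (e := fst (pos_off (proj1_sig x) rest)) in *.
    assert (R0 : rstar k (proj1_sig x) J rest <= snd (pos_off (proj1_sig x) rest) + dist2 e (0, 0)).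
    { unfold rstar. fold e. pose proof (clamp_min k J e 0). pose proof (NR_pos k J).
      specialize (H ltac:(lra)). lra. }
    assert (RN : rstar k (proj1_sig x) J rest <= snd (pos_off (proj1_sig x) rest) + dist2 e (NR k J, 0)).
    { unfold rstar. fold e. pose proof (clamp_min k J e (NR k J)). pose proof (NR_pos k J).
      specialize (H ltac:(lra)). lra. }
    destruct (classify k (proj1_sig y) (proj2_sig y)) as [J' [rest' [Hf' [Hd' Hc']]]].
    assert (EJ : J' = J).
    { destruct (Nat.lt_trichotomy J J') as [L|[L|L]]; auto.
      - exfalso. pose proof (cross_hi k _ _ J rest J' rest' (proj2_sig y) Hf Hd Hf' L).
        unfold dX in Hxy0. fold e in H. lra.
      - exfalso. pose proof (cross_lo k _ _ J rest J' rest' (proj2_sig y) (proj1 Off) Hf Hf' Hd' L).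
        unfold dX in Hxy0. fold e in H. lra. }
    subst J'.
    assert (forall z, proj_pt (on_ray (gray k)) x z \/ proj_pt (on_ray (gray k)) y z ->
              exists s2, 0 <= s2 /\ z = gray k s2 /\ tt k J - 1 <= s2 <= tt k J + NR k J) as Hz.
    { intros z [Hz|Hz].
      - eapply proj_any; eauto.
      - eapply proj_any; eauto. }
    destruct (Hz p Hp) as [s1 [P1 [E1 R1]]]. destruct (Hz q Hq) as [s2 [P2 [E2 R2]]].
    subst p q. unfold dX; simpl proj1_sig. rewrite Pray_dist by auto.
    pose proof (nrm_ge k x J rest Hf (proj1 Off)).
    pose proof (tt_pos k J).
    pose proof (Hkm (tt k J) (nrm x) H0 H).
    pose proof (nn_le k (tt k J) (Hk1 _ H0)). fold (NR k J) in H2.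
    pose proof (Hk1 _ H0).
    assert (Rabs (s1 - s2) <= NR k J + 1) by (unfold Rabs; destruct Rcase_abs; lra).
    lra.
Qed.


Lemma ratio_lt : forall a b eps, 0 < b -> Rabs (a / b) < eps -> a < eps * b.
Proof.
  intros a b eps Hb H. pose proof (Rle_abs (a / b)).
  assert (a / b < eps) by lra.
  replace a with ((a / b) * b) by (field; lra). apply Rmult_lt_compat_r; auto.
Qed.

Lemma bound_C : forall k k', admissible k -> admissible k' -> lim_infty_zero (fun t => k' t / k t) ->
  exists C, 0 <= C /\ forall t, 0 <= t -> k' t <= C * k t.
Proof.
  intros k k' [Hk1 [Hkm _]] [Hk1' [Hkm' _]] Hl.
  destruct (Hl 1 ltac:(lra)) as [M1 HM1].
  set (M := Rmax 0 M1). exists (Rmax 1 (k' M)).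
  assert (0 <= M) by (unfold M; apply Rmax_l).
  assert (1 <= Rmax 1 (k' M)) by apply Rmax_l.
  split; [lra|]. intros t Ht.
  pose proof (Hk1 t Ht).
  assert (Hm : Rmax 1 (k' M) <= Rmax 1 (k' M) * k t).
  { rewrite <- (Rmult_1_r (Rmax 1 (k' M))) at 1. apply Rmult_le_compat_l; lra. }
  assert (Hm2 : k t <= Rmax 1 (k' M) * k t).
  { rewrite <- (Rmult_1_l (k t)) at 1. apply Rmult_le_compat_r; lra. }
  destruct (Rle_dec M t).
  - assert (M1 <= t) by (pose proof (Rmax_r 0 M1); fold M in H2; lra).
    pose proof (ratio_lt (k' t) (k t) 1 ltac:(lra) (HM1 t H2)). lra.
  - pose proof (Hkm' t M Ht ltac:(lra)). pose proof (Rmax_r 1 (k' M)). lra.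
Qed.

Lemma part1 : forall k k', admissible k -> admissible k' -> lim_infty_zero (fun t => k' t / k t) ->
  forall Zs, contracting k' Zs -> contracting k Zs.
Proof.
  intros k k' Hk Hk' Hl Zs [c Hc].
  destruct (bound_C k k' Hk Hk' Hl) as [C [HC HCb]].
  exists (Rabs c * C). intros x y Hxy p q Hp Hq.
  pose proof (Hc x y Hxy p q Hp Hq).
  pose proof (nrm_pos x). pose proof (HCb _ H0).
  destruct Hk' as [Hk1' _]. pose proof (Hk1' _ H0).
  pose proof (Rle_abs c). pose proof (Rabs_pos c).
  assert (c * k' (nrm x) <= Rabs c * k' (nrm x)) by (apply Rmult_le_compat_r; lra).
  assert (Rabs c * k' (nrm x) <= Rabs c * (C * k (nrm x))) by (apply Rmult_le_compat_l; lra).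
  lra.
Qed.

Lemma NR_gt : forall k t, 1 <= k t -> k t - 1 < INR (nn k t).
Proof.
  intros k t H. unfold nn. destruct (base_Int_part (k t)) as [H1 H2].
  assert (0 <= Int_part (k t))%Z.
  { apply le_IZR. simpl. lra. }
  rewrite INR_IZR_INZ, Z2Nat.id by auto. lra.
Qed.

Lemma big_J : forall k M, exists J, (1 <= J)%nat /\ M <= tt k J.
Proof.
  intros k M. exists (S (Z.to_nat (up M))). split; [lia|].
  pose proof (tt_ge k (S (Z.to_nat (up M)))). rewrite S_INR in H.
  destruct (archimed M) as [H1 _].
  assert (IZR (up M) <= INR (Z.to_nat (up M))).
  { destruct (Z_le_gt_dec 0 (up M)).
    - rewrite INR_IZR_INZ, Z2Nat.id by exact l; lra.
    - pose proof (pos_INR (Z.to_nat (up M))). apply Z.gt_lt, IZR_lt in g. lra. }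
  lra.
Qed.

Lemma asym : forall k k', admissible k -> admissible k' -> lim_infty_zero (fun t => k' t / k t) ->
  forall c, exists J, (1 <= J)%nat /\ 1 <= NR k J /\ c * k' (tt k J + NR k J) < NR k J.
Proof.
  intros k k' [Hk1 [Hkm [Hkc Hks]]] [Hk1' [Hkm' [Hkc' _]]] Hl c.
  set (C := Rabs c + 1). assert (HC : 1 <= C) by (unfold C; pose proof (Rabs_pos c); lra).
  set (eps := / (4 * C)). assert (He : 0 < eps) by (unfold eps; apply Rinv_0_lt_compat; lra).
  destruct (Hl eps He) as [M1 HM1]. destruct (Hks 1 ltac:(lra)) as [M2 HM2].
  destruct (big_J k (Rmax 1 (Rmax M1 M2))) as [J [HJ HtJ]].
  exists J. split; auto.
  set (t := tt k J) in *.
  pose proof (Rmax_l 1 (Rmax M1 M2)). pose proof (Rmax_r 1 (Rmax M1 M2)).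
  pose proof (Rmax_l M1 M2). pose proof (Rmax_r M1 M2).
  assert (Ht1 : 1 <= t) by lra.
  pose proof (Hk1 t ltac:(lra)) as Hkt. pose proof (Hk1' t ltac:(lra)) as Hkt'.
  pose proof (ratio_lt (k' t) (k t) eps ltac:(lra) (HM1 t ltac:(lra))) as R1.
  pose proof (ratio_lt (k t) t 1 ltac:(lra) (HM2 t ltac:(lra))) as R2.
  assert (Hk4 : 4 <= k t).
  { assert (eps * k t * (4 * C) = k t) by (unfold eps; field; lra).
    assert (k' t * (4 * C) < eps * k t * (4 * C)) by (apply Rmult_lt_compat_r; lra). nra. }
  unfold NR. fold t.
  pose proof (NR_gt k t Hkt) as G1. pose proof (nn_le k t Hkt) as G2.
  set (n := INR (nn k t)) in *.
  split; [lra|].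
  assert (A1 : k' (t + n) <= k' (2 * t)) by (apply Hkm'; lra).
  assert (A2 : k' (2 * t) <= 2 * k' t).
  { pose proof (Hkc' (2 * t) 0 (/2) ltac:(lra) ltac:(lra) ltac:(lra)).
    replace (/ 2 * (2 * t) + (1 - / 2) * 0) with t in H3 by field.
    pose proof (Hk1' 0 ltac:(lra)). lra. }
  assert (A3 : c * k' (t + n) <= C * k' (t + n)).
  { apply Rmult_le_compat_r; [pose proof (Hk1' (t + n) ltac:(lra)); lra|].
    unfold C; pose proof (Rle_abs c); lra. }
  assert (A4 : C * k' (t + n) <= C * (2 * k' t)) by (apply Rmult_le_compat_l; lra).
  assert (A5 : C * (2 * k' t) < C * (2 * (eps * k t))) by (apply Rmult_lt_compat_l; lra).
  assert (A6 : C * (2 * (eps * k t)) = k t / 2) by (unfold eps; field; lra).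
  lra.
Qed.


Lemma dist_unique : forall Zs (x : XA) r1 r2, is_dist_to Zs x r1 -> is_dist_to Zs x r2 -> r1 = r2.
Proof.
  intros Zs x r1 r2 [A1 B1] [A2 B2].
  destruct (Rtotal_order r1 r2) as [L|[E|L]]; auto; exfalso.
  - destruct (B1 (r2 - r1) ltac:(lra)) as [z [Hz Hd]]. pose proof (A2 z Hz). lra.
  - destruct (B2 (r1 - r2) ltac:(lra)) as [z [Hz Hd]]. pose proof (A1 z Hz). lra.
Qed.

Lemma dist2_vert : forall a n, 0 <= n -> dist2 (a, - n) (a, 0) = n.
Proof.
  intros. unfold dist2, norm2; simpl.
  replace ((a - a) * (a - a) + (- n - 0) * (- n - 0)) with (n * n) by ring.
  apply sqrt_square; auto.
Qed.

Lemma dist2_horiz : forall n, 0 <= n -> dist2 (0, - n) (n, - n) = n.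
Proof.
  intros. unfold dist2, norm2; simpl.
  replace ((0 - n) * (0 - n) + (- n - - n) * (- n - - n)) with (n * n) by ring.
  apply sqrt_square; auto.
Qed.

Definition xpt k J a b : XA := exist valid_pt (FP (w k J) a b) (valid_w k J).

Lemma not_contracting : forall k k', admissible k -> admissible k' ->
  lim_infty_zero (fun t => k' t / k t) -> ~ contracting k' (on_ray (gray k)).
Proof.
  intros k k' Hk Hk' Hl [c Hc].
  destruct (asym k k' Hk Hk' Hl c) as [J [HJ [Hn Hlt]]].
  set (n := NR k J) in *. assert (Hnn : n = NR k J) by reflexivity. clearbody n.
  set (x := xpt k J 0 (- n)). set (y := xpt k J n (- n)).
  assert (Hf : forall a b, full (FP (w k J) a b) = w k J ++ []) by (intros; simpl; rewrite app_nil_r; auto).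
  assert (Hd : hdc k J []) by (intros l r H; discriminate).
  assert (Off : forall a, offray k (FP (w k J) a (- n)) J []).
  { intros a. split; [intros [_ E]; exact E|]. intros [_ [a' [E _]]]. injection E; intros; lra. }
  assert (Rx : rstar k (proj1_sig x) J [] = n).
  { unfold rstar; simpl. unfold clampv; simpl. try rewrite <- Hnn.
    rewrite Rmin_left by lra. rewrite Rmax_left by lra. rewrite dist2_vert by lra. ring. }
  assert (Ry : rstar k (proj1_sig y) J [] = n).
  { unfold rstar; simpl. unfold clampv; simpl. try rewrite <- Hnn.
    rewrite Rmin_left by lra. rewrite Rmax_right by lra. rewrite dist2_vert by lra. ring. }
  assert (Dx : is_dist_to (on_ray (gray k)) x n).
  { rewrite <- Rx. apply dist_off; [apply Hf|exact Hd|apply Off]. }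
  assert (Dy : is_dist_to (on_ray (gray k)) y n).
  { rewrite <- Ry. apply dist_off; [apply Hf|exact Hd|apply Off]. }
  assert (Dxy : dX x y = n).
  { cbv delta [dX x y xpt gray] beta; simpl proj1_sig. rewrite (pdist_gen _ _ [] []).
    - simpl. rewrite dist2_horiz by lra. ring.
    - simpl. rewrite <- (app_nil_r (w k J)). rewrite lcp_app. reflexivity.
    - simpl; tauto. }
  pose proof (tt_pos k J) as Ht0.
  assert (Hp : proj_pt (on_ray (gray k)) x (gray k (tt k J))).
  { split; [exists (tt k J); auto|]. exists n. split; auto.
    cbv delta [dX x y xpt gray] beta; simpl proj1_sig. rewrite (M_mid k _ J []) by (auto; lra). simpl.
    replace (tt k J - tt k J) with 0 by ring. rewrite dist2_vert by lra. ring. }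
  assert (Hq : proj_pt (on_ray (gray k)) y (gray k (tt k J + n))).
  { split; [exists (tt k J + n); split; auto; lra|]. exists n. split; auto.
    cbv delta [dX x y xpt gray] beta; simpl proj1_sig. rewrite (M_mid k _ J []) by (auto; lra). simpl.
    replace (tt k J + n - tt k J) with n by ring. rewrite dist2_vert by lra. ring. }
  assert (Hxy : forall r, is_dist_to (on_ray (gray k)) x r -> dX x y <= r).
  { intros r Hr. rewrite (dist_unique _ _ _ _ Hr Dx). lra. }
  pose proof (Hc x y Hxy _ _ (or_introl Hp) (or_intror Hq)) as H.
  assert (Dpq : dX (gray k (tt k J)) (gray k (tt k J + n)) = n).
  { cbv delta [dX x y xpt gray] beta; simpl proj1_sig. rewrite Pray_dist by lra. replace (tt k J - (tt k J + n)) with (- n) by ring.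
    rewrite Rabs_Ropp, Rabs_right; lra. }
  assert (Nx : nrm x = tt k J + n).
  { unfold nrm, dX. change (proj1_sig o) with o_pt. rewrite pdist_sym, <- (Pray_0 k).
    destruct J as [|m]; [lia|]. pose proof (tt_S_ge1 k m).
    cbv delta [x xpt] beta; simpl proj1_sig.
    rewrite (M_lo_gen k _ (S m) []); [|apply Hf|intros [_ E]; exact E|lra|lra].
    unfold hx. simpl. rewrite <- dist2_0, dist2_vert by lra. ring. }
  rewrite Dpq, Nx in H. lra.
Qed.

Theorem proposition6p3 (k k' : R -> R) :
  admissible k -> admissible k' -> lim_infty_zero (fun t => k' t / k t) ->
  (forall g : R -> XA, geodesic_ray g ->
      contracting k' (on_ray g) -> contracting k (on_ray g)) /\
  (exists g : R -> XA, geodesic_ray g /\ contracting k (on_ray g) /\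
      ~ contracting k' (on_ray g)).
Proof.
  intros Hk Hk' Hl. split.
  - intros g _. apply part1; auto.
  - exists (gray k). split; [apply geodesic_gray|]. split.
    + apply contracting_gray; auto.
    + apply not_contracting; auto.
Qed.
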